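(* Let $n,m\ge 1$, let $G\in\mathbb{R}^{2n\times 2n}$ be symmetric, let $C\in\mathbb{R}^{2m\times 2n}$, and set $A=\Sigma_n(G+C^\top\Sigma_m C/2)$. Define the controllability matrix $\mathcal{C}=(\Sigma_n C^\top\Sigma_m,\ A\Sigma_n C^\top\Sigma_m,\ \ldots,\ A^{2n-1}\Sigma_n C^\top\Sigma_m)$ and the observability matrix $\mathcal{O}=(C^\top,\ A^\top C^\top,\ \ldots,\ (A^\top)^{2n-1}C^\top)^\top$. Then for every vector $v\in\mathbb{R}^{2n}$, $$\Sigma_n v\in \mathrm{Ker}(\mathcal{O}) \iff v\in\mathrm{Ker}(\mathcal{C}^\top).$$
   Context: For $k\ge1$, $\Sigma_k$ denotes the $2k\times 2k$ block-diagonal matrix $\mathrm{diag}\{\Sigma,\ldots,\Sigma\}$ with $\Sigma=\begin{pmatrix}0&1\\-1&0\end{pmatrix}$. These matrices describe a linear quantum system $d\hat x=A\hat x\,dt+\Sigma_nC^\top\Sigma_m\,d\hat{\mathcal W}$, $d\hat{\mathcal W}^{\rm out}=C\hat x\,dt+d\hat{\mathcal W}$, where $\hat x$ is the vector of $n$ canonical position/momentum pairs, $\hat{\mathcal W}$ the input noise quadratures and $\hat{\mathcal W}^{\rm out}$ the output quadratures. *)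

(* Defs.v *)
From HB Require Import structures.
From mathcomp Require Import all_boot all_order all_algebra.
Unset Printing Implicit Defensive.
Import Order.TTheory GRing.Theory Num.Theory.
Local Open Scope ring_scope.

(* Sigma_k = diag(Sigma,...,Sigma), Sigma = [[0,1],[-1,0]], a (2k)x(2k) matrix.
   Indices 0..2k-1; block of index i is i %/ 2. *)
Definition Sigma_mx {R : pzRingType} (k : nat) : 'M[R]_(2 * k) :=
  \matrix_(i, j)
    if (i %/ 2 == j %/ 2)%N then
      (if ~~ odd i && odd j then 1 else if odd i && ~~ odd j then -1 else 0)
    else 0.

Fixpoint krylov {R : pzRingType} {p q : nat} (A : 'M[R]_p) (B : 'M[R]_(p, q))
    (k : nat) : 'M[R]_(p, k * q) :=
  match k with
  | 0 => 0
  | k'.+1 => row_mx B (A *m krylov A B k')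
  end.

Definition drift {R : fieldType} (n m : nat) (G : 'M[R]_(2 * n))
    (C : 'M[R]_(2 * m, 2 * n)) : 'M[R]_(2 * n) :=
  Sigma_mx n *m (G + (2%:R)^-1 *: (C^T *m Sigma_mx m *m C)).

Definition ctrb_mx {R : fieldType} (n m : nat) (G : 'M[R]_(2 * n))
    (C : 'M[R]_(2 * m, 2 * n)) : 'M[R]_(2 * n, (2 * n) * (2 * m)) :=
  krylov (drift n m G C) (Sigma_mx n *m C^T *m Sigma_mx m) (2 * n).

Definition obsv_mx {R : fieldType} (n m : nat) (G : 'M[R]_(2 * n))
    (C : 'M[R]_(2 * m, 2 * n)) : 'M[R]_((2 * n) * (2 * m), 2 * n) :=
  (krylov (drift n m G C)^T C^T (2 * n))^T.

(* Main.v *)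
Require Import Defs.
From HB Require Import structures.
From mathcomp Require Import all_boot all_order all_algebra.
From mathcomp Require Import zify.
Import Order.TTheory GRing.Theory Num.Theory.
Local Open Scope ring_scope.

Lemma sigma_sq (R : pzRingType) k :
  Sigma_mx k *m Sigma_mx k = - 1%:M :> 'M[R]_(2*k).
Proof.
apply/matrixP=> i l; rewrite !mxE.
have hp : ((if odd i then i.-1 else i.+1) < 2 * k)%N.
  have := ltn_ord i; have := modn2 i; case: (odd i) => /=; lia.
pose p := Ordinal hp.
rewrite (bigD1 p) //= big1 ?addr0; last first.
  move=> j /negbTE hj; rewrite !mxE.
  case: ifP => h1; last by rewrite mul0r.
  move: hj; rewrite -val_eqE /=.
  have := modn2 i; have := modn2 j; move/eqP: h1.
  case: (odd i); case: (odd j) => /= h1 mj mi hj; rewrite ?mul0r //; lia.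
rewrite !mxE /=.
have := modn2 i; have := modn2 l; have := ltn_ord i;
case oi: (odd i); case ol: (odd l) => /= hi ml mi.
- have E1 : ((i %/ 2)%N == (i.-1 %/ 2)%N) = true by apply/eqP; lia.
  have Op : odd i.-1 = false by move: oi; case: (nat_of_ord i) => //= j /negbTE.
  rewrite E1 Op /=; case: eqP => h.
  + have -> : i == l by apply/eqP/val_inj => /=; lia.
    by rewrite mulN1r.
  + have -> : (i == l) = false by case: eqP => // e; case: h; rewrite -e; lia.
    by rewrite mulr0 oppr0.
- have E1 : ((i %/ 2)%N == (i.-1 %/ 2)%N) = true by apply/eqP; lia.
  have Op : odd i.-1 = false by move: oi; case: (nat_of_ord i) => //= j /negbTE.
  have -> : (i == l) = false by case: eqP => // e; move: oi ol; rewrite e => ->.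
  by rewrite E1 Op /=; case: ifP; rewrite mulr0 oppr0.
- have E1 : ((i %/ 2)%N == (i.+1 %/ 2)%N) = true by apply/eqP; lia.
  have -> : (i == l) = false by case: eqP => // e; move: oi ol; rewrite e => ->.
  by rewrite E1 oi /=; case: ifP; rewrite mulr0 oppr0.
- have E1 : ((i %/ 2)%N == (i.+1 %/ 2)%N) = true by apply/eqP; lia.
  rewrite E1 oi /=; case: eqP => h.
  + have -> : i == l by apply/eqP/val_inj => /=; lia.
    by rewrite mul1r.
  + have -> : (i == l) = false by case: eqP => // e; case: h; rewrite -e; lia.
    by rewrite mulr0 oppr0.
Qed.

Lemma sigmaT (R : pzRingType) k : (Sigma_mx k)^T = - (Sigma_mx k : 'M[R]_(2*k)).
Proof.
apply/matrixP=> i j; rewrite !mxE eq_sym.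
case: ifP => _; last by rewrite oppr0.
by case: (odd i); case: (odd j); rewrite /= ?opprK ?oppr0.
Qed.

Lemma col_mx_eq0 (R : pzRingType) p1 p2 q (X : 'M[R]_(p1, q)) (Y : 'M[R]_(p2, q)) :
  col_mx X Y = 0 <-> X = 0 /\ Y = 0.
Proof.
split; last by case=> -> ->; rewrite col_mx0.
by rewrite -col_mx0 => /eq_col_mx.
Qed.

Lemma krylovT0 (R : comRingType) p q (A : 'M[R]_p) (B : 'M[R]_(p, q)) k
  (x : 'cV[R]_p) :
  (krylov A B k)^T *m x = 0 <->
  (forall j, (j < k)%N -> B^T *m iter j (mulmx A^T) x = 0).
Proof.
elim: k x => [|k IH] x /=.
  by split=> // _; rewrite trmx0 mul0mx.
rewrite tr_row_mx mul_col_mx col_mx_eq0 trmx_mul -mulmxA IH.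
split.
  case=> h1 h2 [|j] //= hj; rewrite -iterS iterSr; exact: h2.
move=> h; split; first exact: (h 0%N).
by move=> j hj; rewrite -iterSr; apply: h.
Qed.

Lemma sigma_inj (R : pzRingType) k q (x : 'M[R]_(2*k, q)) :
  Sigma_mx k *m x = 0 -> x = 0.
Proof.
move=> h; have := congr1 (mulmx (Sigma_mx k)) h.
by rewrite mulmxA sigma_sq mulmx0 mulNmx mul1mx => /eqP; rewrite oppr_eq0 => /eqP.
Qed.

Lemma key (R : numFieldType) n m (G : 'M[R]_(2 * n)) (C : 'M[R]_(2 * m, 2 * n))
  (hG : G^T = G) :
  Sigma_mx n *m (drift n m G C)^T =
  - (drift n m G C *m Sigma_mx n) + Sigma_mx n *m (C^T *m Sigma_mx m *m C) *m Sigma_mx n.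
Proof.
rewrite /drift.
set S := Sigma_mx n; set X := C^T *m Sigma_mx m *m C; set h := (2%:R : R)^-1.
have XT : X^T = - X by rewrite /X !trmx_mul trmxK sigmaT mulNmx mulmxN mulmxA.
have hh : h + h = 1 by rewrite -mulr2n -[h *+ 2]mulr_natl /h mulfV // pnatr_eq0.
rewrite trmx_mul linearD /= linearZ /= XT hG sigmaT.
rewrite -/S -[S *m X *m S]scale1r -hh. rewrite !(mulmxDl, mulmxDr, mulmxN, mulNmx, scalerN, scalerDl, opprD, opprK, scalemxAl, scalemxAr, mulmxA). rewrite -!scalemxAr -!scalemxAl -addrA. by rewrite addKr.
Qed.

Theorem lemma1 (R : realFieldType) (n m : nat) (hn : (1 <= n)%N) (hm : (1 <= m)%N)
    (G : 'M[R]_(2 * n)) (C : 'M[R]_(2 * m, 2 * n)) (hG : G^T = G)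
    (v : 'cV[R]_(2 * n)) :
  obsv_mx n m G C *m (Sigma_mx n *m v) = 0 <-> (ctrb_mx n m G C)^T *m v = 0.
Proof.
rewrite /obsv_mx /ctrb_mx krylovT0 krylovT0 !trmxK.
set A := drift n m G C; set S := Sigma_mx n; set T := Sigma_mx m.
have hB : forall w : 'cV[R]_(2 * n),
    (S *m C^T *m T)^T *m w = 0 <-> C *m (S *m w) = 0.
  move=> w; rewrite !trmx_mul trmxK /T /S !sigmaT !(mulmxN, mulNmx) opprK -!mulmxA.
  split; last by move=> ->; rewrite mulmx0.
  exact: sigma_inj.
have step : forall j, (forall i, (i < j)%N -> C *m (S *m iter i (mulmx A^T) v) = 0) ->
    S *m iter j (mulmx A^T) v = (-1) ^+ j *: iter j (mulmx A) (S *m v).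
  elim=> [|j IH] h /=; first by rewrite scale1r.
  rewrite mulmxA key // mulmxDl.
  have -> : S *m (C^T *m T *m C) *m S *m iter j (mulmx A^T) v =
    (S *m C^T *m T) *m (C *m (S *m iter j (mulmx A^T) v)) by rewrite !mulmxA.
  rewrite (h j (ltnSn j)) mulmx0 addr0 mulNmx -mulmxA.
  rewrite IH; last by move=> i hi; apply: h; apply: ltnW.
  by rewrite -scalemxAr exprS -scalerA scaleN1r.
split.
- move=> h.
  have H : forall j, (j <= 2 * n)%N ->
      forall i, (i < j)%N -> C *m (S *m iter i (mulmx A^T) v) = 0.
    elim=> [|j IH] hj i hi //.
    rewrite ltnS leq_eqVlt in hi; case/orP: hi => [/eqP -> | hi].
      rewrite step; last by apply: IH; apply: ltnW.
      by rewrite -scalemxAr h // scaler0.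
    by apply: IH => //; apply: ltnW.
  by move=> j hj; apply/hB; apply: (H (2 * n)%N).
- move=> h j hj.
  have h' : forall i, (i < 2 * n)%N -> C *m (S *m iter i (mulmx A^T) v) = 0.
    by move=> i hi; apply/hB; apply: h.
  have := h' j hj; rewrite step; last first.
    by move=> i hi; apply: h'; apply: ltn_trans hj.
  by rewrite -scalemxAr => /eqP; rewrite scaler_eq0 signr_eq0 => /eqP.
Qed.
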